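(* If $\varepsilon$ is sufficiently small (depending only on $g$), then $|\phi|\lesssim\sqrt{\varepsilon}$ on $\mathcal{D}$, with implicit constant depending only on $g$.
   Context: Target $d\rho^2+g(\rho)^2d\theta^2$ with $g$ smooth, odd, $g'(0)=1$, $\int_0^s g\to\infty$ as $s\to\infty$, satisfying the Grillakis condition $sg'(s)+g(s)>0$ for $s>0$; $f=gg'$; $\kappa>0$. In null coordinates $(u,\underline{u})$ with $\mathbf{g}=-\Omega^2du\,d\underline{u}+r^2d\theta^2$, normalized on the axis $\{u=\underline{u}\}$ by $r=0$, $\partial_{\underline{u}}r=1/2$, $\partial_ur=-1/2$, $\Omega=1$, the system reads: $\partial_u(\Omega^{-2}\partial_ur)=-\kappa\Omega^{-2}r(\partial_u\phi)^2$, $\partial_{\underline{u}}(\Omega^{-2}\partial_{\underline{u}}r)=-\kappa\Omega^{-2}r(\partial_{\underline{u}}\phi)^2$, $\partial_u\partial_{\underline{u}}r=\kappa\Omega^2g(\phi)^2/(4r)$, $\Omega^{-2}(\partial_u\Omega\,\partial_{\underline{u}}\Omega-\Omega\partial_u\partial_{\underline{u}}\Omega)=\tfrac{\kappa}{8}\big(4\partial_u\phi\,\partial_{\underline{u}}\phi+\Omega^2g(\phi)^2/r^2\big)$, $\partial_u(r\partial_{\underline{u}}\phi)+\partial_{\underline{u}}(r\partial_u\phi)=-\Omega^2f(\phi)/(2r)$. Let $\tau=(u+\underline{u})/2$, $\varrho=(\underline{u}-u)/2$ and $\mathcal{D}=\{-1\le\tau<0,\ \underline{u}\le0,\ u\le\underline{u}\}$;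 the solution is regular on $\mathcal{D}$, $\phi=0$ on the axis. Flux smallness conditions: (F1) for every $\underline{u}\in[-1,0]$, $\int_{-2-\underline{u}}^{\underline{u}}\big((\partial_u\phi)^2+g(\phi)^2/r^2\big)r\,(u',\underline{u})\,du'\le\varepsilon$; (F2) for every $u\in[-2,0]$, $\int_{\max(u,-2-u)}^{0}\big((\partial_{\underline{u}}\phi)^2+g(\phi)^2/r^2\big)r\,(u,\underline{u}')\,d\underline{u}'\le\varepsilon$; both are assumed. *)

(* Defs.v *)
From Stdlib Require Import Reals.
Open Scope R_scope.

Definition du (F : R -> R -> R) (u ub val : R) : Prop :=
  derivable_pt_lim (fun x => F x ub) u val.

Definition dub (F : R -> R -> R) (u ub val : R) : Prop :=
  derivable_pt_lim (fun y => F u y) ub val.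

Definition cont2 (F : R -> R -> R) (u ub : R) : Prop :=
  forall e, 0 < e -> exists d, 0 < d /\
    forall x y, Rabs (x - u) < d -> Rabs (y - ub) < d ->
      Rabs (F x y - F u ub) < e.

Definition C2_on (S : R -> R -> Prop) (F Fu Fv Fuu Fuv Fvv : R -> R -> R) : Prop :=
  forall u v, S u v ->
    du F u v (Fu u v) /\ dub F u v (Fv u v) /\
    du Fu u v (Fuu u v) /\ dub Fu u v (Fuv u v) /\
    du Fv u v (Fuv u v) /\ dub Fv u v (Fvv u v) /\
    cont2 F u v /\ cont2 Fu u v /\ cont2 Fv u v /\
    cont2 Fuu u v /\ cont2 Fuv u v /\ cont2 Fvv u v.

Definition smooth1 (g : R -> R) : Prop :=
  exists D : nat -> R -> R, D O = g /\
    forall n s, derivable_pt_lim (D n) s (D (S n) s).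

(* the region D = { -1 <= tau < 0, ub <= 0, u <= ub },
   tau = (u+ub)/2 *)
Definition inD (u ub : R) : Prop :=
  -1 <= (u + ub) / 2 /\ (u + ub) / 2 < 0 /\ ub <= 0 /\ u <= ub.

Definition target_ok (g g' : R -> R) : Prop :=
  smooth1 g /\
  (forall s, derivable_pt_lim g s (g' s)) /\
  (forall s, g (- s) = - g s) /\
  g' 0 = 1 /\
  (* int_0^s g -> infinity as s -> infinity, via the primitive G(s) = int_0^s g *)
  (exists G : R -> R, G 0 = 0 /\ (forall s, derivable_pt_lim G s (g s)) /\
     forall M, exists S0, forall s, S0 <= s -> M <= G s) /\
  (forall s, 0 < s -> s * g' s + g s > 0).

(* Main.v *)
Require Import Defs.
From Stdlib Require Import Reals Lra.
From Coquelicot Require Import Coquelicot.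
Open Scope R_scope.


Section G.
Variables g g' : R -> R.
Hypothesis Hd : forall s, derivable_pt_lim g s (g' s).
Hypothesis Hodd : forall s, g (- s) = - g s.
Hypothesis Hg1 : g' 0 = 1.
Hypothesis Hgr : forall s, 0 < s -> s * g' s + g s > 0.

Lemma g0 : g 0 = 0.
Proof. assert (H := Hodd 0). rewrite Ropp_0 in H. lra. Qed.

Lemma sg_deriv s : derivable_pt_lim (fun x => x * g x) s (g s + s * g' s).
Proof.
  assert (H := derivable_pt_lim_mult id g s 1 (g' s) (derivable_pt_lim_id s) (Hd s)).
  unfold mult_fct, id in H. replace (g s + s * g' s) with (1 * g s + s * g' s) by ring. exact H.
Qed.

Lemma sg_mono d s : 0 < d -> d < s -> d * g d < s * g s.
Proof.
  intros H1 H2.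
  destruct (MVT_cor2 (fun x => x * g x) (fun x => g x + x * g' x) d s H2) as [c [Hc1 Hc2]].
  { intros; apply sg_deriv. }
  assert (0 < g c + c * g' c) by (specialize (Hgr c); lra).
  assert (0 < (g c + c * g' c) * (s - d)) by (apply Rmult_lt_0_compat; lra).
  lra.
Qed.

Lemma gpos s : 0 < s -> 0 < g s.
Proof.
  intros Hs.
  destruct (MVT_cor2 (fun x => x * g x) (fun x => g x + x * g' x) 0 s Hs) as [c [Hc1 Hc2]].
  { intros; apply sg_deriv. }
  rewrite g0 in Hc1.
  assert (0 < g c + c * g' c) by (specialize (Hgr c); lra).
  assert (0 < (g c + c * g' c) * (s - 0)) by (apply Rmult_lt_0_compat; lra).
  assert (0 < s * g s) by lra.
  destruct (Rlt_le_dec 0 (g s)) as [|Hn]; auto.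
  nra.
Qed.

Lemma glin : exists a, 0 < a /\ a <= 1/2 /\ forall s, 0 <= s <= 1 -> a * s <= g s.
Proof.
  assert (H := Hd 0). rewrite Hg1 in H.
  destruct (H (1/2)) as [del Hdel]; [lra|].
  set (d1 := Rmin (del/2) 1).
  assert (Hd1 : 0 < d1) by (unfold d1; apply Rmin_glb_lt; destruct del; simpl; lra).
  assert (Hd1' : d1 <= 1) by apply Rmin_r.
  assert (Hd1d : d1 < del) by (unfold d1; destruct del as [dd Hdd]; simpl; eapply Rle_lt_trans; [apply Rmin_l|lra]).
  assert (Hsmall : forall s, 0 < s <= d1 -> s / 2 <= g s).
  { intros s Hs. assert (Hs0 : s <> 0) by lra.
    assert (Ha : Rabs s < del) by (rewrite Rabs_right; lra).
    specialize (Hdel s Hs0 Ha). rewrite Rplus_0_l, g0, Rminus_0_r in Hdel.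
    apply Rabs_def2 in Hdel. destruct Hdel as [_ Hl].
    assert (1/2 < g s / s) by lra.
    apply Rmult_lt_compat_r with (r := s) in H0; [|lra].
    replace (g s / s * s) with (g s) in H0 by (field; lra). lra. }
  exists (d1 * d1 / 2). repeat split.
  - apply Rmult_lt_0_compat; [nra|lra].
  - nra.
  - intros s Hs. destruct (Rle_lt_dec s d1) as [Hle|Hlt].
    + destruct (Req_dec s 0) as [->|Hne]; [rewrite g0; lra|].
      specialize (Hsmall s ltac:(lra)). assert (d1*d1 <= 1) by nra. nra.
    + assert (Hm := sg_mono d1 s Hd1 Hlt).
      specialize (Hsmall d1 ltac:(lra)).
      assert (d1 * (d1/2) <= s * g s) by nra.
      assert (Hgs : 0 < g s) by (apply gpos; lra).
      nra.
Qed.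

End G.
Section GG.
Variables g g' G : R -> R.
Hypothesis Hd : forall s, derivable_pt_lim g s (g' s).
Hypothesis Hodd : forall s, g (- s) = - g s.
Hypothesis Hg1 : g' 0 = 1.
Hypothesis Hgr : forall s, 0 < s -> s * g' s + g s > 0.
Hypothesis HG0 : G 0 = 0.
Hypothesis HGd : forall s, derivable_pt_lim G s (g s).

Lemma Geven s : G (- s) = G s.
Proof.
  destruct (Req_dec s 0) as [->|Hne]; [now rewrite Ropp_0|].
  assert (Hder : forall x, derivable_pt_lim (fun x => G x - G (- x)) x 0).
  { intro x. replace 0 with (g x - g (-x) * (-1)) by (rewrite Hodd; ring).
    apply derivable_pt_lim_minus; [apply HGd|].
    apply (derivable_pt_lim_comp (fun x => - x) G x (-1) (g (-x))).
    - replace (-1) with (- (1)) by ring. apply derivable_pt_lim_opp, derivable_pt_lim_id.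
    - apply HGd. }
  destruct (Rlt_le_dec 0 s).
  - destruct (MVT_cor2 _ (fun _ => 0) 0 s r (fun c _ => Hder c)) as [c [Hc _]].
    rewrite Ropp_0 in Hc. lra.
  - destruct (MVT_cor2 _ (fun _ => 0) s 0 ltac:(lra) (fun c _ => Hder c)) as [c [Hc _]].
    rewrite Ropp_0 in Hc. lra.
Qed.

Lemma Gmono x y : 0 <= x -> x <= y -> G x <= G y.
Proof.
  intros H1 H2. destruct (Req_dec x y) as [->|Hne]; [lra|].
  destruct (MVT_cor2 G g x y ltac:(lra) (fun c _ => HGd c)) as [c [Hc Hc2]].
  assert (0 < g c) by (apply (gpos g g'); auto; lra).
  assert (0 < g c * (y - x)) by (apply Rmult_lt_0_compat; lra). lra.
Qed.

Lemma Gquad a : (forall s, 0 <= s <= 1 -> a * s <= g s) ->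
  forall s, 0 <= s <= 1 -> a * s * s / 2 <= G s.
Proof.
  intros Ha s Hs. destruct (Req_dec s 0) as [->|Hne]; [rewrite HG0; lra|].
  assert (Hsq : forall x, derivable_pt_lim (fun x => x * x) x (1 * x + x * 1)).
  { intro x. exact (derivable_pt_lim_mult id id x 1 1 (derivable_pt_lim_id x) (derivable_pt_lim_id x)). }
  destruct (MVT_cor2 (fun x => G x - a / 2 * (x * x)) (fun x => g x - a / 2 * (1 * x + x * 1)) 0 s ltac:(lra)) as [c [Hc Hc2]].
  { intros c Hc. apply derivable_pt_lim_minus; [apply HGd|].
    exact (derivable_pt_lim_scal (fun x => x * x) (a/2) c _ (Hsq c)). }
  rewrite HG0 in Hc. specialize (Ha c ltac:(lra)).
  assert (0 <= (g c - a / 2 * (1 * c + c * 1)) * (s - 0)) by (apply Rmult_le_pos; lra).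
  lra.
Qed.
Lemma Gfinal a : 0 < a -> (forall s, 0 <= s <= 1 -> a * s <= g s) ->
  forall p e, 0 < e -> e <= a / 2 -> G p <= e / 2 -> Rabs p <= sqrt (/ a) * sqrt e.
Proof.
  intros Ha0 Ha p e He Hea HGp.
  assert (HGq : G (Rabs p) = G p).
  { unfold Rabs; destruct (Rcase_abs p); [apply Geven|reflexivity]. }
  assert (Hq0 := Rabs_pos p).
  assert (Hq1 : Rabs p <= 1).
  { destruct (Rle_lt_dec (Rabs p) 1) as [|Hlt]; auto.
    assert (G 1 <= G (Rabs p)) by (apply Gmono; lra).
    assert (a * 1 * 1 / 2 <= G 1) by (apply (Gquad a Ha); lra). lra. }
  assert (a * Rabs p * Rabs p / 2 <= G (Rabs p)) by (apply (Gquad a Ha); lra).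
  assert (Hsq : Rabs p * Rabs p <= / a * e).
  { apply Rmult_le_reg_l with a; [lra|]. replace (a * (/ a * e)) with e by (field; lra). nra. }
  rewrite <- sqrt_mult_alt by (left; apply Rinv_0_lt_compat; lra).
  rewrite <- (sqrt_square (Rabs p)) by lra.
  apply sqrt_le_1_alt. exact Hsq.
Qed.
End GG.
Lemma cont_of_pt (f : R -> R) x : continuity_pt f x -> continuous f x.
Proof. intro H. now apply continuity_pt_filterlim. Qed.

Lemma flux_bound (h h' F : R->R) a b e : a<b ->
  (forall x, a<=x<=b -> derivable_pt_lim h x (h' x)) ->
  (forall x, a<=x<=b -> continuity_pt h' x) ->
  ex_RInt F a b -> RInt F a b <= e ->
  (forall x, a<x<b -> Rabs (h' x) <= F x / 2) -> Rabs (h b - h a) <= e/2.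
Proof.
  intros Hab Hd Hc HF Hle Hp.
  assert (HI : is_RInt h' a b (minus (h b) (h a))).
  { apply (is_RInt_derive (V:=R_CompleteNormedModule)).
    - intros x Hx. rewrite Rmin_left, Rmax_right in Hx by lra. apply is_derive_Reals; auto.
    - intros x Hx. rewrite Rmin_left, Rmax_right in Hx by lra. apply cont_of_pt; auto. }
  apply (is_RInt_unique (V:=R_CompleteNormedModule)) in HI. unfold minus, plus, opp in HI; simpl in HI.
  assert (Hex : ex_RInt h' a b).
  { apply (ex_RInt_continuous (V:=R_CompleteNormedModule)). intros x Hx. rewrite Rmin_left, Rmax_right in Hx by lra. apply cont_of_pt; auto. }
  assert (HF2 : ex_RInt (fun x => F x / 2) a b).
  { apply (ex_RInt_ext (V:=R_CompleteNormedModule)) with (fun y => scal (/2) (F y)).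
    - intros; unfold scal; simpl; unfold mult; simpl; lra.
    - apply (ex_RInt_scal (V:=R_NormedModule)); auto. }
  assert (HV : RInt (fun x => F x / 2) a b = RInt F a b / 2).
  { rewrite (RInt_ext (V:=R_CompleteNormedModule) _ (fun y => scal (/2) (F y))).
    - rewrite (RInt_scal (V:=R_CompleteNormedModule)) by auto. unfold scal; simpl; unfold mult; simpl; lra.
    - intros; unfold scal; simpl; unfold mult; simpl; lra. }
  assert (E: RInt h' a b = h b - h a) by (rewrite HI; reflexivity). rewrite <- E.
  eapply Rle_trans. apply abs_RInt_le; [lra|auto].
  eapply Rle_trans. apply RInt_le with (g := fun x => F x / 2); [lra| |auto|].
  - apply (ex_RInt_norm h'); auto.
  - intros; apply Hp; auto.
  - rewrite HV; lra.
Qed.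

Lemma cont2_pt (F : R -> R -> R) u ub : cont2 F u ub -> continuity_pt (fun x => F x ub) u.
Proof.
  intros H. unfold continuity_pt, continue_in, limit1_in, limit_in. intros e He.
  destruct (H e He) as [d [Hd Hd2]]. exists d; split; auto.
  intros x [_ Hx]. simpl in *. unfold R_dist in *. apply Hd2; auto.
  rewrite Rminus_eq_0, Rabs_R0; lra.
Qed.

Lemma amgm A q r : 0 < r -> Rabs (A * q) <= ((q ^ 2 + A ^ 2 / r ^ 2) * r) / 2.
Proof.
  intros Hr. rewrite Rabs_mult.
  replace (q ^ 2) with (Rabs q ^ 2) by apply pow2_abs.
  replace (A ^ 2) with (Rabs A ^ 2) by apply pow2_abs.
  set (x := Rabs A). set (y := Rabs q).
  apply Rmult_le_reg_l with (2 * r); [lra|].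
  replace (2 * r * ((y ^ 2 + x ^ 2 / r ^ 2) * r / 2)) with ((y*r)^2 + x^2) by (field; lra).
  assert (0 <= (y*r - x)^2) by apply pow2_ge_0. nra.
Qed.

Theorem mainTheorem13 :
  forall (g g' : R -> R), target_ok g g' ->
  forall (kappa : R), 0 < kappa ->
  exists (eps0 C : R), 0 < eps0 /\ 0 < C /\
  forall (r r_u r_ub r_uu r_uub r_ubub
          Om Om_u Om_ub Om_uu Om_uub Om_ubub
          phi phi_u phi_ub phi_uu phi_uub phi_ubub : R -> R -> R)
         (eps : R),
    0 < eps -> eps <= eps0 ->
    (* regularity of the solution on D *)
    C2_on inD r r_u r_ub r_uu r_uub r_ubub ->
    C2_on inD Om Om_u Om_ub Om_uu Om_uub Om_ubub ->
    C2_on inD phi phi_u phi_ub phi_uu phi_uub phi_ubub ->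
    (forall u ub, inD u ub -> 0 < Om u ub) ->
    (forall u ub, inD u ub -> u < ub -> 0 < r u ub) ->
    (* axis normalisation and phi = 0 on the axis *)
    (forall u, inD u u ->
       r u u = 0 /\ r_ub u u = 1 / 2 /\ r_u u u = - (1 / 2) /\
       Om u u = 1 /\ phi u u = 0) ->
    (* Raychaudhuri equations *)
    (forall u ub, inD u ub ->
       du (fun x y => / (Om x y ^ 2) * r_u x y) u ub
          (- kappa * / (Om u ub ^ 2) * r u ub * (phi_u u ub) ^ 2)) ->
    (forall u ub, inD u ub ->
       dub (fun x y => / (Om x y ^ 2) * r_ub x y) u ub
          (- kappa * / (Om u ub ^ 2) * r u ub * (phi_ub u ub) ^ 2)) ->
    (* wave equation for r *)
    (forall u ub, inD u ub -> u < ub ->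
       r_uub u ub = kappa * Om u ub ^ 2 * (g (phi u ub)) ^ 2 / (4 * r u ub)) ->
    (* equation for Omega *)
    (forall u ub, inD u ub -> u < ub ->
       / (Om u ub ^ 2) * (Om_u u ub * Om_ub u ub - Om u ub * Om_uub u ub)
       = kappa / 8 * (4 * phi_u u ub * phi_ub u ub
                      + Om u ub ^ 2 * (g (phi u ub)) ^ 2 / (r u ub ^ 2))) ->
    (* wave map equation, f = g g' *)
    (forall u ub, inD u ub -> u < ub ->
       exists a b,
         du (fun x y => r x y * phi_ub x y) u ub a /\
         dub (fun x y => r x y * phi_u x y) u ub b /\
         a + b = - (Om u ub ^ 2 * (g (phi u ub) * g' (phi u ub))) / (2 * r u ub)) ->
    (* flux condition (F1), along u at fixed ub (truncated before tau = 0) *)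
    (forall ub, -1 <= ub <= 0 ->
       forall c, -2 - ub <= c <= ub -> c + ub < 0 ->
       exists pr : Riemann_integrable
         (fun x => ((phi_u x ub) ^ 2 + (g (phi x ub)) ^ 2 / (r x ub) ^ 2) * r x ub)
         (-2 - ub) c,
       RiemannInt pr <= eps) ->
    (* flux condition (F2), along ub at fixed u *)
    (forall u, -2 <= u <= 0 ->
       exists pr : Riemann_integrable
         (fun y => ((phi_ub u y) ^ 2 + (g (phi u y)) ^ 2 / (r u y) ^ 2) * r u y)
         (Rmax u (-2 - u)) 0,
       RiemannInt pr <= eps) ->
    (* conclusion *)
    forall u ub, inD u ub -> Rabs (phi u ub) <= C * sqrt eps.
Proof.
  intros g g' Hok kappa Hk.
  destruct Hok as [_ [Hd [Hodd [Hg1 [[G [HG0 [HGd _]]] Hgr]]]]].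
  destruct (glin g g' Hd Hodd Hg1 Hgr) as [a [Ha0 [Ha1 Ha]]].
  exists (a/2), (sqrt (/a)). split; [lra|]. split; [apply sqrt_lt_R0; apply Rinv_0_lt_compat; lra|].
  intros r r_u r_ub r_uu r_uub r_ubub Om Om_u Om_ub Om_uu Om_uub Om_ubub
    phi phi_u phi_ub phi_uu phi_uub phi_ubub eps Heps Heps0 Cr COm Cphi HOm Hr Hax
    _ _ _ _ _ HF1 _.
  assert (Hclaim : forall u ub, inD u ub -> ub < 0 -> G (phi u ub) <= eps / 2).
  { intros u ub HD Hub.
    destruct HD as [HD1 [HD2 [HD3 HD4]]].
    assert (HinD : forall x, -2 - ub <= x <= ub -> inD x ub).
    { intros x Hx. unfold inD. lra. }
    destruct (Req_dec u ub) as [->|Hne].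
    { rewrite (proj2 (proj2 (proj2 (proj2 (Hax ub (HinD ub ltac:(lra))))))), HG0. lra. }
    destruct (HF1 ub ltac:(lra) ub ltac:(lra) ltac:(lra)) as [pr Hpr].
    set (F := fun x => ((phi_u x ub) ^ 2 + (g (phi x ub)) ^ 2 / (r x ub) ^ 2) * r x ub) in *.
    assert (HexF : ex_RInt F (-2 - ub) ub) by (apply ex_RInt_Reals_1; exact pr).
    assert (Hex2 : ex_RInt F u ub) by (apply (ex_RInt_Chasles_2 (V:=R_CompleteNormedModule)) with (-2 - ub); [lra|exact HexF]).
    assert (Hex1 : ex_RInt F (-2 - ub) u) by (apply (ex_RInt_Chasles_1 (V:=R_CompleteNormedModule)) with ub; [lra|exact HexF]).
    assert (Hch := RInt_Chasles (V:=R_CompleteNormedModule) F (-2 - ub) u ub Hex1 Hex2).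
    rewrite (RInt_Reals F _ _ pr) in Hch. unfold plus in Hch; simpl in Hch.
    assert (Hpos : 0 <= RInt F (-2 - ub) u).
    { apply RInt_ge_0; [lra|exact Hex1|]. intros x Hx.
      assert (0 < r x ub) by (apply Hr; [apply HinD; lra|lra]).
      unfold F. apply Rmult_le_pos; [|lra].
      apply Rplus_le_le_0_compat; [apply pow2_ge_0|].
      unfold Rdiv. apply Rmult_le_pos; [apply pow2_ge_0|].
      left. apply Rinv_0_lt_compat. apply pow_lt. lra. }
    assert (Hb := flux_bound (fun x => G (phi x ub)) (fun x => g (phi x ub) * phi_u x ub) F u ub eps
      ltac:(lra)).
    assert (Hfin : Rabs (G (phi ub ub) - G (phi u ub)) <= eps / 2).
    { apply Hb.
      - intros x Hx. destruct (Cphi x ub (HinD x ltac:(lra))) as [Hdx _].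
        exact (derivable_pt_lim_comp (fun x => phi x ub) G x (phi_u x ub) (g (phi x ub)) Hdx (HGd _)).
      - intros x Hx. destruct (Cphi x ub (HinD x ltac:(lra))) as [_ [_ [_ [_ [_ [_ [Hc1 [Hc2 _]]]]]]]].
        apply continuity_pt_mult.
        + apply (continuity_pt_comp (fun x => phi x ub) g x).
          * apply cont2_pt; exact Hc1.
          * apply derivable_continuous_pt. exists (g' (phi x ub)). apply Hd.
        + apply cont2_pt; exact Hc2.
      - exact Hex2.
      - lra.
      - intros x Hx. assert (0 < r x ub) by (apply Hr; [apply HinD; lra|lra]).
        unfold F. apply amgm; lra. }
    rewrite (proj2 (proj2 (proj2 (proj2 (Hax ub (HinD ub ltac:(lra))))))), HG0 in Hfin.
    rewrite Rminus_0_l, Rabs_Ropp in Hfin. assert (Hab := Rle_abs (G (phi u ub))). lra. }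
  assert (Hneg : forall u ub, inD u ub -> ub < 0 -> Rabs (phi u ub) <= sqrt (/ a) * sqrt eps).
  { intros u ub HD Hub. apply (Gfinal g g' G Hd Hodd Hgr HG0 HGd a Ha0 Ha); auto. }
  intros u ub HD.
  destruct (Rlt_le_dec ub 0) as [Hub|Hub]; [apply Hneg; auto|].
  destruct HD as [HD1 [HD2 [HD3 HD4]]].
  assert (Hub0 : ub = 0) by lra. subst ub.
  destruct (Rle_lt_dec (Rabs (phi u 0)) (sqrt (/ a) * sqrt eps)) as [|Hgt]; auto.
  exfalso.
  destruct (Cphi u 0 ltac:(unfold inD; lra)) as [_ [_ [_ [_ [_ [_ [Hc _]]]]]]].
  destruct (Hc (Rabs (phi u 0) - sqrt (/ a) * sqrt eps) ltac:(lra)) as [d [Hd0 Hd2]].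
  set (t := Rmin (d / 2) (- u / 2)).
  assert (Ht1 : 0 < t) by (unfold t; apply Rmin_glb_lt; lra).
  assert (Ht2 : t <= d / 2) by apply Rmin_l.
  assert (Ht3 : t <= - u / 2) by apply Rmin_r.
  assert (Hc2 := Hd2 (u + t) (- t / 2) ltac:(rewrite Rabs_right; lra) ltac:(rewrite Rabs_left; lra)).
  assert (Hb := Hneg (u + t) (- t / 2) ltac:(unfold inD; lra) ltac:(lra)).
  assert (Htr := Rabs_triang_inv (phi u 0) (phi u 0 - phi (u + t) (- t / 2))).
  replace (phi u 0 - (phi u 0 - phi (u + t) (- t / 2))) with (phi (u + t) (- t / 2)) in Htr by ring.
  rewrite Rabs_minus_sym in Htr. lra.
Qed.
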